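(* Let $\Theta$ be a variety and $H\in\Theta$. The category $LK_\Theta(H)$ of all LG-definable sets coincides with the category $L_0K_\Theta(H)$ of all MT-definable sets.
   Context: Setting: variety $\Theta$, infinite variable set $X^0$, $\Gamma^0$ its finite subsets, $W(X)$ free $\Theta$-algebras, points $\mu:W(X)\to H$. $\Phi(X)$ ($X\in\Gamma^0$) is the $X$-sort of the multi-sorted algebra of first-order formulas over $\Theta$ (free multi-sorted Halmos algebra generated by equalities in $W(X)$) with valuation $Val^X_H$; $LKer(\mu)=\{u\in\Phi(X):\mu\in Val^X_H(u)\}$. A set $A\subset\mathrm{Hom}(W(X),H)$ is LG-definable if $A=\{\mu\mid T\subset LKer(\mu)\}$ for some $T\subset\Phi(X)$; it is MT-definable if $A=\{\mu\mid T\subset Tp^H(\mu)\}$ for some $X$-type $T$, where an $X$-type is a set of first-order formulas over $X^0$ with free variables in $X=\{x_1,\dots,x_n\}$ and bound variables in $X^0\setminus X$ consistent with the theory of $H$, and $Tp^H(\mu)$ is the set of such formulas $u(x_1,\dots,x_n;\bar y)$ with $u(\mu(x_1),\dots,\mu(x_n);\bar y)$ true in $H$. $Set_\Theta(H)$ is the category whose objects are pairs $(X,A)$, $X\in\Gamma^0$, $A\subset\mathrm{Hom}(W(X),H)$, and whose morphisms $(X,A)\to(Y,B)$ are induced by homomorphisms $s:W(Y)\to W(X)$ with $\mu s\in B$ for all $\mu\in A$. $LK_\Theta(H)$ (resp. $L_0K_\Theta(H)$) is the full subcategory on objects with $A$ LG-definable (resp. MT-definable). *)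

(* Defs.v *)
From HB Require Import structures.
From mathcomp Require Import all_boot.
From mathcomp Require Import finmap.

Set Implicit Arguments.
Unset Strict Implicit.
Unset Printing Implicit Defensive.

Local Open Scope fset_scope.

Inductive term (ops : Type) (ar : ops -> nat) (T : Type) : Type :=
| Var (x : T)
| App (o : ops) (f : 'I_(ar o) -> term ar T).

Arguments Var {ops ar T} x.
Arguments App {ops ar T} o f.

Record algebra (ops : Type) (ar : ops -> nat) := Algebra {
  carrier :> Type;
  interp : forall o : ops, ('I_(ar o) -> carrier) -> carrier
}.

Fixpoint eval (ops : Type) (ar : ops -> nat) (H : algebra ar) (T : Type)
  (e : T -> H) (t : term ar T) : H :=
  match t with
  | Var x => e x
  | App o f => @interp _ ar H o (fun i => eval e (f i))
  end.

Fixpoint subst (ops : Type) (ar : ops -> nat) (T U : Type)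
  (sigma : T -> term ar U) (t : term ar T) : term ar U :=
  match t with
  | Var x => sigma x
  | App o f => App o (fun i => subst sigma (f i))
  end.

(* The variety Theta, given by a set of identities Sigma (in variables *)
(* nat).  [theq Sigma] is the fully invariant congruence generated by   *)
(* Sigma (equational consequence); W(T) = term T / theq Sigma is the    *)
(* free Theta-algebra on T.                                             *)

Inductive theq (ops : Type) (ar : ops -> nat)
  (Sigma : term ar nat -> term ar nat -> Prop) (T : Type)
  : term ar T -> term ar T -> Prop :=
| theq_ax (l r : term ar nat) (sigma : nat -> term ar T) :
    Sigma l r -> theq Sigma (subst sigma l) (subst sigma r)
| theq_refl t : theq Sigma t t
| theq_sym t t' : theq Sigma t t' -> theq Sigma t' t
| theq_trans t1 t2 t3 : theq Sigma t1 t2 -> theq Sigma t2 t3 -> theq Sigma t1 t3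
| theq_cong (o : ops) (f g : 'I_(ar o) -> term ar T) :
    (forall i, theq Sigma (f i) (g i)) -> theq Sigma (App o f) (App o g).

Definition in_variety (ops : Type) (ar : ops -> nat)
  (Sigma : term ar nat -> term ar nat -> Prop) (H : algebra ar) : Prop :=
  forall l r, Sigma l r -> forall e : nat -> H, eval e l = eval e r.

(* mu : W(T) -> H is a homomorphism (mu is given on representatives). *)
Definition is_hom (ops : Type) (ar : ops -> nat)
  (Sigma : term ar nat -> term ar nat -> Prop) (H : algebra ar) (T : Type)
  (mu : term ar T -> H) : Prop :=
  (forall t t', theq Sigma t t' -> mu t = mu t') /\
  (forall o (f : 'I_(ar o) -> term ar T), mu (App o f) = @interp _ ar H o (fun i => mu (f i))).
Arguments is_hom {ops ar} Sigma H {T} mu.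

(* s : W(T) -> W(U) is a homomorphism of free Theta-algebras. *)
Definition is_shom (ops : Type) (ar : ops -> nat)
  (Sigma : term ar nat -> term ar nat -> Prop) (T U : Type)
  (s : term ar T -> term ar U) : Prop :=
  (forall t t', theq Sigma t t' -> theq Sigma (s t) (s t')) /\
  (forall o (f : 'I_(ar o) -> term ar T),
      theq Sigma (s (App o f)) (App o (fun i => s (f i)))).

(* Variables: X^0 is the type V; X in Gamma^0 is a finite set X : {fset V}. *)
Definition fvar (V : choiceType) (X : {fset V}) : Type := {v : V | v \in X}.

(* The multi-sorted algebra Phi of formulas (Halmos algebra), given     *)
(* by its generators and operations; its sorts are X : {fset V}.        *)

Inductive hformula (V : choiceType) (ops : Type) (ar : ops -> nat)
  (Sigma : term ar nat -> term ar nat -> Prop) : {fset V} -> Type :=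
| HEq (X : {fset V}) (w w' : term ar (fvar X)) : hformula Sigma X
| HTrue (X : {fset V}) : hformula Sigma X
| HFalse (X : {fset V}) : hformula Sigma X
| HNeg (X : {fset V}) : hformula Sigma X -> hformula Sigma X
| HAnd (X : {fset V}) : hformula Sigma X -> hformula Sigma X -> hformula Sigma X
| HOr (X : {fset V}) : hformula Sigma X -> hformula Sigma X -> hformula Sigma X
| HEx (X : {fset V}) (x : V) : x \in X -> hformula Sigma X -> hformula Sigma X
| HSub (X Y : {fset V}) (s : term ar (fvar Y) -> term ar (fvar X)) :
    is_shom Sigma s -> hformula Sigma Y -> hformula Sigma X.

Fixpoint Val (V : choiceType) (ops : Type) (ar : ops -> nat)
  (Sigma : term ar nat -> term ar nat -> Prop) (H : algebra ar)
  (X : {fset V}) (u : hformula Sigma X) : (term ar (fvar X) -> H) -> Prop :=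
  match u in hformula _ X return (term ar (fvar X) -> H) -> Prop with
  | HEq _ w w' => fun mu => mu w = mu w'
  | HTrue _ => fun _ => True
  | HFalse _ => fun _ => False
  | HNeg _ u1 => fun mu => ~ @Val V ops ar Sigma H _ u1 mu
  | HAnd _ u1 u2 => fun mu => @Val V ops ar Sigma H _ u1 mu /\ @Val V ops ar Sigma H _ u2 mu
  | HOr _ u1 u2 => fun mu => @Val V ops ar Sigma H _ u1 mu \/ @Val V ops ar Sigma H _ u2 mu
  | HEx X0 x _ u1 => fun mu =>
      exists nu : term ar (fvar X0) -> H,
        @is_hom _ ar Sigma H _ nu /\
        (forall y : fvar X0, sval y <> x -> nu (Var y) = mu (Var y)) /\
        @Val V ops ar Sigma H _ u1 nu
  | HSub _ _ s _ u1 => fun mu => @Val V ops ar Sigma H _ u1 (fun t => mu (s t))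
  end.
Arguments Val {V ops ar Sigma} H {X} u mu.

Definition LKer (V : choiceType) (ops : Type) (ar : ops -> nat)
  (Sigma : term ar nat -> term ar nat -> Prop) (H : algebra ar)
  (X : {fset V}) (mu : term ar (fvar X) -> H) : hformula Sigma X -> Prop :=
  fun u => Val H u mu.
Arguments LKer {V ops ar Sigma} H {X} mu u.

Definition LG_definable (V : choiceType) (ops : Type) (ar : ops -> nat)
  (Sigma : term ar nat -> term ar nat -> Prop) (H : algebra ar)
  (X : {fset V}) (A : (term ar (fvar X) -> H) -> Prop) : Prop :=
  exists T : hformula Sigma X -> Prop,
    forall mu, A mu <-> (is_hom Sigma H mu /\ forall u, T u -> LKer H mu u).

Inductive fol (V : Type) (ops : Type) (ar : ops -> nat) : Type :=
| FEq (t t' : term ar V)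
| FBot
| FNot (p : fol V ar)
| FAnd (p q : fol V ar)
| FOr (p q : fol V ar)
| FImp (p q : fol V ar)
| FEx (v : V) (p : fol V ar)
| FAll (v : V) (p : fol V ar).

Fixpoint occurs (V : Type) (ops : Type) (ar : ops -> nat) (v : V)
  (t : term ar V) : Prop :=
  match t with
  | Var x => x = v
  | App o f => exists i, occurs v (f i)
  end.

Fixpoint free_in (V : Type) (ops : Type) (ar : ops -> nat) (v : V)
  (p : fol V ar) : Prop :=
  match p with
  | FEq t t' => occurs v t \/ occurs v t'
  | FBot => False
  | FNot p1 => free_in v p1
  | FAnd p1 p2 | FOr p1 p2 | FImp p1 p2 => free_in v p1 \/ free_in v p2
  | FEx w p1 | FAll w p1 => w <> v /\ free_in v p1
  end.

Fixpoint bound_in (V : Type) (ops : Type) (ar : ops -> nat) (v : V)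
  (p : fol V ar) : Prop :=
  match p with
  | FEq _ _ | FBot => False
  | FNot p1 => bound_in v p1
  | FAnd p1 p2 | FOr p1 p2 | FImp p1 p2 => bound_in v p1 \/ bound_in v p2
  | FEx w p1 | FAll w p1 => w = v \/ bound_in v p1
  end.

Fixpoint holds (V : eqType) (ops : Type) (ar : ops -> nat) (H : algebra ar)
  (e : V -> H) (p : fol V ar) : Prop :=
  match p with
  | FEq t t' => eval e t = eval e t'
  | FBot => False
  | FNot p1 => ~ holds e p1
  | FAnd p1 p2 => holds e p1 /\ holds e p2
  | FOr p1 p2 => holds e p1 \/ holds e p2
  | FImp p1 p2 => holds e p1 -> holds e p2
  | FEx w p1 => exists a : H, holds (fun z => if z == w then a else e z) p1
  | FAll w p1 => forall a : H, holds (fun z => if z == w then a else e z) p1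
  end.

Definition Xformula (V : choiceType) (ops : Type) (ar : ops -> nat)
  (X : {fset V}) (p : fol V ar) : Prop :=
  (forall v, free_in v p -> v \in X) /\ (forall v, bound_in v p -> v \notin X).

Definition Tp (V : choiceType) (ops : Type) (ar : ops -> nat) (H : algebra ar)
  (X : {fset V}) (mu : term ar (fvar X) -> H) (p : fol V ar) : Prop :=
  Xformula X p /\
  exists e : V -> H, (forall y : fvar X, e (sval y) = mu (Var y)) /\ holds e p.
Arguments Tp {V ops ar} H {X} mu p.

Definition MT_definable (V : choiceType) (ops : Type) (ar : ops -> nat)
  (Sigma : term ar nat -> term ar nat -> Prop) (H : algebra ar)
  (X : {fset V}) (A : (term ar (fvar X) -> H) -> Prop) : Prop :=
  exists T : fol V ar -> Prop,
    (forall p, T p -> Xformula X p) /\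
    forall mu, A mu <-> (is_hom Sigma H mu /\ forall p, T p -> Tp H mu p).

Arguments LG_definable {V ops ar} Sigma H {X} A.
Arguments MT_definable {V ops ar} Sigma H {X} A.

(* Main.v *)
Require Import Defs.
From HB Require Import structures.
From mathcomp Require Import all_boot finmap.
From Stdlib Require Import Classical FunctionalExtensionality.
Set Implicit Arguments. Unset Strict Implicit. Unset Printing Implicit Defensive.

Section Basics.
Variables (ops : Type) (ar : ops -> nat).

Lemma eval_ext (T : Type) (K : algebra ar) (e e' : T -> K) (t : term ar T) :
  (forall v, occurs v t -> e v = e' v) -> eval e t = eval e' t.
Proof.
elim: t => [x|o f IH] /= h; first exact: h.
congr (interp _); apply: functional_extensionality => i.
apply: IH => v hv; apply: h; by exists i.
Qed.

Lemma eval_subst (T U : Type) (K : algebra ar) (e : U -> K) (s : T -> term ar U) (t : term ar T) :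
  eval e (subst s t) = eval (fun y => eval e (s y)) t.
Proof.
elim: t => [x|o f IH] //=.
congr (interp _); apply: functional_extensionality => i; exact: IH.
Qed.

Lemma subst_subst (T U W : Type) (s : T -> term ar U) (s' : U -> term ar W) (t : term ar T) :
  subst s' (subst s t) = subst (fun y => subst s' (s y)) t.
Proof.
elim: t => [x|o f IH] //=.
congr (App _); apply: functional_extensionality => i; exact: IH.
Qed.

Lemma occurs_subst (T U : Type) (s : T -> term ar U) (t : term ar T) v :
  occurs v (subst s t) -> exists y, occurs v (s y).
Proof.
elim: t => [x|o f IH] /=; first by move=> h; exists x.
case=> i hi; exact: (IH i hi).
Qed.

Variable Sigma : term ar nat -> term ar nat -> Prop.

Lemma hom_eval (K : algebra ar) (T : Type) (mu : term ar T -> K) :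
  is_hom Sigma K mu -> forall t, mu t = eval (fun y => mu (Var y)) t.
Proof.
case=> _ hA; elim=> [x|o f IH] //=.
rewrite hA; congr (interp _); apply: functional_extensionality => i; exact: IH.
Qed.

Lemma eval_hom (K : algebra ar) (HK : in_variety Sigma K) (T : Type) (a : T -> K) :
  is_hom Sigma K (eval a).
Proof.
split=> //; move=> t t'; elim=> {t t'}.
- move=> l r sigma hlr; rewrite !eval_subst; exact: HK.
- by [].
- by move=> t t' _ ->.
- by move=> t1 t2 t3 _ -> _ ->.
- move=> o f g _ IH /=; congr (interp _); apply: functional_extensionality => i; exact: IH.
Qed.

Lemma shom_subst (T U : Type) (s : T -> term ar U) : is_shom Sigma (subst s).
Proof.
split; last by move=> o f; apply: theq_refl.
move=> t t'; elim=> {t t'}.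
- move=> l r sigma hlr; rewrite !subst_subst; exact: theq_ax.
- move=> t; exact: theq_refl.
- move=> t t' _ h; exact: theq_sym.
- move=> t1 t2 t3 _ h1 _ h2; exact: theq_trans h1 h2.
- move=> o f g _ IH /=; exact: theq_cong.
Qed.

Lemma hom_comp (K : algebra ar) (T U : Type) (mu : term ar U -> K) (s : term ar T -> term ar U) :
  is_hom Sigma K mu -> is_shom Sigma s -> is_hom Sigma K (fun t => mu (s t)).
Proof.
case=> h1 h2 [s1 s2]; split.
- move=> t t' h; apply: h1; exact: s1.
- move=> o f; rewrite (h1 _ _ (s2 o f)) h2 //.
Qed.

End Basics.

Lemma holds_ext (V : eqType) (ops : Type) (ar : ops -> nat) (K : algebra ar)
  (p : fol V ar) (e e' : V -> K) :
  (forall v, free_in v p -> e v = e' v) -> (holds e p <-> holds e' p).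
Proof.
elim: p e e' => [t t'|| p IH | p IHp q IHq | p IHp q IHq | p IHp q IHq | w p IH | w p IH] e e' h /=.
- rewrite (@eval_ext _ _ _ _ e e' t) ?(@eval_ext _ _ _ _ e e' t') //.
  + by move=> v hv; apply: h; right.
  + by move=> v hv; apply: h; left.
- by [].
- by rewrite (IH e e').
- rewrite (IHp e e') ?(IHq e e') // => v hv; apply: h; by [right|left].
- rewrite (IHp e e') ?(IHq e e') // => v hv; apply: h; by [right|left].
- rewrite (IHp e e') ?(IHq e e') // => v hv; apply: h; by [right|left].
- have E : forall a, holds (fun z => if z == w then a else e z) p <->
                     holds (fun z => if z == w then a else e' z) p.
    move=> a; apply: IH => v hv; case: eqP => // nv; apply: h; split=> //; by move=> E; apply: nv.
  by split=> -[a ha]; exists a; apply/E.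
- have E : forall a, holds (fun z => if z == w then a else e z) p <->
                     holds (fun z => if z == w then a else e' z) p.
    move=> a; apply: IH => v hv; case: eqP => // nv; apply: h; split=> //; by move=> E; apply: nv.
  by split=> ha a; apply/E.
Qed.
Section Trans.
Variables (V : choiceType) (ops : Type) (ar : ops -> nat)
  (Sigma : term ar nat -> term ar nat -> Prop) (fr : seq V -> V).
Hypothesis frP : forall s, fr s \notin s.

Fixpoint trans (X : {fset V}) (u : hformula Sigma X) : (fvar X -> term ar V) -> seq V -> fol V ar :=
  match u in hformula _ X return (fvar X -> term ar V) -> seq V -> fol V ar with
  | HEq _ w w' => fun s A => FEq (subst s w) (subst s w')
  | HTrue _ => fun _ _ => FNot (@FBot V ops ar)
  | HFalse _ => fun _ _ => @FBot V ops ar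
  | HNeg _ u1 => fun s A => FNot (trans u1 s A)
  | HAnd _ u1 u2 => fun s A => FAnd (trans u1 s A) (trans u2 s A)
  | HOr _ u1 u2 => fun s A => FOr (trans u1 s A) (trans u2 s A)
  | HEx _ x _ u1 => fun s A =>
      FEx (fr A) (trans u1 (fun y => if sval y == x then Var (fr A) else s y) (fr A :: A))
  | HSub _ _ s0 _ u1 => fun s A => trans u1 (fun y => subst s (s0 (Var y))) A
  end.

Lemma trans_free (X : {fset V}) (u : hformula Sigma X) s A v :
  free_in v (trans u s A) -> exists y, occurs v (s y).
Proof.
elim: u s A => {X} [X w w'|X|X|X u IH|X u IHu u' IHu'|X u IHu u' IHu'|X x hx u IH|X Y s0 hs u IH] s A /=.
- by case=> h; exact: occurs_subst h.
- by [].
- by [].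
- exact: IH.
- by case=> [/IHu|/IHu'].
- by case=> [/IHu|/IHu'].
- case=> nz /IH [y]; case: eqP => _; last by exists y.
  by move=> /= E; case: nz.
- by case/IH=> y h; exact: occurs_subst h.
Qed.

Lemma trans_bound (X : {fset V}) (u : hformula Sigma X) s A v :
  bound_in v (trans u s A) -> v \notin A.
Proof.
elim: u s A => {X} [X w w'|X|X|X u IH|X u IHu u' IHu'|X u IHu u' IHu'|X x hx u IH|X Y s0 hs u IH] s A /=.
- by [].
- by [].
- by [].
- exact: IH.
- by case=> [/IHu|/IHu'].
- by case=> [/IHu|/IHu'].
- case=> [<-|/IH]; first exact: frP.
  by rewrite in_cons negb_or => /andP[].
- exact: IH.
Qed.

Variables (K : algebra ar) (HK : in_variety Sigma K).

Lemma fvar_eq (X : {fset V}) (y y' : fvar X) : sval y = sval y' -> y = y'.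
Proof.
case: y y' => v hv [v' hv'] /= E; subst v'; congr exist; exact: bool_irrelevance.
Qed.

Lemma trans_sem (X : {fset V}) (u : hformula Sigma X) s A
  (mu : term ar (fvar X) -> K) (e : V -> K) :
  is_hom Sigma K mu ->
  (forall y v, occurs v (s y) -> v \in A) ->
  (forall y, eval e (s y) = mu (Var y)) ->
  (Val K u mu <-> holds e (trans u s A)).
Proof.
elim: u s A mu e => {X} [X w w'|X|X|X u IH|X u IHu u' IHu'|X u IHu u' IHu'|X x hx u IH|X Y s0 hs0 u IH]
  s A mu e hmu hA hs /=.
- have E : forall t, eval e (subst s t) = mu t.
    move=> t; rewrite eval_subst (hom_eval hmu t); congr eval.
    exact: functional_extensionality.
  by rewrite !E.
- by split=> // _ /=.
- by [].
- by rewrite (IH s A mu e).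
- by rewrite (IHu s A mu e) // (IHu' s A mu e).
- by rewrite (IHu s A mu e) // (IHu' s A mu e).
- set z := fr A.
  set s' := fun y : fvar X => if sval y == x then Var z else s y.
  have hA' : forall y v, occurs v (s' y) -> v \in z :: A.
    move=> y v; rewrite /s'; case: eqP => _ /=.
      by move=> ->; rewrite mem_head.
    by move/hA => h; rewrite in_cons h orbT.
  have key : forall (nu : term ar (fvar X) -> K) a,
     (forall y, sval y <> x -> nu (Var y) = mu (Var y)) ->
     nu (Var (exist _ x hx)) = a ->
     forall y, eval (fun w => if w == z then a else e w) (s' y) = nu (Var y).
    move=> nu a hnu ha y; rewrite /s'; case: eqP => hy /=.
      rewrite eqxx -ha; congr nu; congr Var; exact: fvar_eq.
    rewrite hnu // -hs; apply: eval_ext => v hv.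
    case: eqP => // vz; move: (frP A); rewrite -/z -vz (hA _ _ hv) //.
  split.
  + case=> nu [hnu [hag hv]]; exists (nu (Var (exist _ x hx))).
    by apply/(IH s' (z :: A) nu) => //; apply: key.
  + case=> a ha.
    set nu := eval (fun y : fvar X => if sval y == x then a else mu (Var y)).
    have hnu : is_hom Sigma K nu by apply: eval_hom.
    have hag : forall y, sval y <> x -> nu (Var y) = mu (Var y).
      by move=> y hy; rewrite /nu /=; case: eqP.
    exists nu; split=> //; split=> //.
    have hk := key nu a hag.
    have hk' : nu (Var (exist _ x hx)) = a by rewrite /nu /= eqxx.
    exact: ((IH s' (z :: A) nu _ hnu hA' (hk hk')).2 ha).
- apply: IH => //.
  + exact: hom_comp.
  + by move=> y v hv; case: (occurs_subst hv) => y' /hA.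
  + move=> y; rewrite eval_subst (hom_eval hmu (s0 (Var y))); congr eval.
    exact: functional_extensionality.
Qed.
End Trans.
Section CTrans.
Variables (V : choiceType) (ops : Type) (ar : ops -> nat)
  (Sigma : term ar nat -> term ar nat -> Prop).

Fixpoint tvars (t : term ar V) : seq V :=
  match t with
  | Var x => [:: x]
  | App o f => flatten [seq tvars (f i) | i <- enum 'I_(ar o)]
  end.

Fixpoint fvars (p : fol V ar) : seq V :=
  match p with
  | FEq t t' => tvars t ++ tvars t'
  | FBot => [::]
  | FNot p1 => fvars p1
  | FAnd p1 p2 | FOr p1 p2 | FImp p1 p2 => fvars p1 ++ fvars p2
  | FEx w p1 | FAll w p1 => w :: fvars p1
  end.

Lemma occurs_tvars v t : occurs v t -> v \in tvars t.
Proof.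
elim: t => [x|o f IH] /=; first by move=> ->; rewrite mem_head.
case=> i /IH h; apply/flatten_mapP; exists i => //; exact: mem_enum.
Qed.

Lemma free_fvars v p : free_in v p -> v \in fvars p.
Proof.
elim: p => [t t'|| p IH | p IHp q IHq | p IHp q IHq | p IHp q IHq | w p IH | w p IH] /=.
- by case=> /occurs_tvars h; rewrite mem_cat h ?orbT.
- by [].
- exact: IH.
- by case=> [/IHp|/IHq] h; rewrite mem_cat h ?orbT.
- by case=> [/IHp|/IHq] h; rewrite mem_cat h ?orbT.
- by case=> [/IHp|/IHq] h; rewrite mem_cat h ?orbT.
- by case=> _ /IH h; rewrite in_cons h orbT.
- by case=> _ /IH h; rewrite in_cons h orbT.
Qed.

Variables (Y : {fset V}) (tr : V -> fvar Y).
Hypothesis trP : forall v, v \in Y -> sval (tr v) = v.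

Definition conv (t : term ar V) : term ar (fvar Y) := subst (fun v => Var (tr v)) t.

Fixpoint ctr (p : fol V ar) : hformula Sigma Y :=
  match p with
  | FEq t t' => HEq Sigma (conv t) (conv t')
  | FBot => @HFalse V ops ar Sigma Y
  | FNot p1 => HNeg (ctr p1)
  | FAnd p1 p2 => HAnd (ctr p1) (ctr p2)
  | FOr p1 p2 => HOr (ctr p1) (ctr p2)
  | FImp p1 p2 => HOr (HNeg (ctr p1)) (ctr p2)
  | FEx w p1 => HEx (proj2_sig (tr w)) (ctr p1)
  | FAll w p1 => HNeg (HEx (proj2_sig (tr w)) (HNeg (ctr p1)))
  end.

Variables (K : algebra ar) (HK : in_variety Sigma K).

Lemma ex_helper (mu : term ar (fvar Y) -> K) w (Q : (V -> K) -> Prop) :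
  is_hom Sigma K mu -> w \in Y ->
  (forall e e', (forall v, v \in Y -> e v = e' v) -> (Q e <-> Q e')) ->
  ((exists nu, is_hom Sigma K nu /\
      (forall y, sval y <> sval (tr w) -> nu (Var y) = mu (Var y)) /\
      Q (fun v => nu (Var (tr v)))) <->
   exists a, Q (fun z => if z == w then a else mu (Var (tr z)))).
Proof.
move=> hmu hw hQ; rewrite (trP hw); split.
- case=> nu [hnu [hag hq]]; exists (nu (Var (tr w))).
  apply/(hQ _ _ _)/hq => v hv; case: eqP => [->//|nv].
  by rewrite hag // trP.
- case=> a ha.
  set nu := eval (fun y : fvar Y => if sval y == w then a else mu (Var y)).
  exists nu; split; first exact: eval_hom.
  split; first by move=> y hy; rewrite /nu /=; case: eqP.
  apply/(hQ _ _ _)/ha => v hv; rewrite /nu /= (trP hv).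
  by case: eqP.
Qed.

Lemma ctr_sem p (mu : term ar (fvar Y) -> K) :
  is_hom Sigma K mu -> (forall v, v \in fvars p -> v \in Y) ->
  (Val K (ctr p) mu <-> holds (fun v => mu (Var (tr v))) p).
Proof.
elim: p mu => [t t'|| p IH | p IHp q IHq | p IHp q IHq | p IHp q IHq | w p IH | w p IH] mu hmu hY /=.
- have E : forall t, mu (conv t) = eval (fun v => mu (Var (tr v))) t.
    by move=> t0; rewrite /conv (hom_eval hmu) eval_subst.
  by rewrite !E.
- by [].
- by rewrite (IH mu).
- rewrite (IHp mu) ?(IHq mu) // => v hv; apply: hY; by rewrite mem_cat hv ?orbT.
- rewrite (IHp mu) ?(IHq mu) // => v hv; apply: hY; by rewrite mem_cat hv ?orbT.
- have hp : forall v, v \in fvars p -> v \in Y by move=> v hv; apply: hY; rewrite mem_cat hv.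
  have hq : forall v, v \in fvars q -> v \in Y by move=> v hv; apply: hY; rewrite mem_cat hv orbT.
  rewrite (IHp mu hmu hp) (IHq mu hmu hq).
  split; first by case=> [h1 h2|h1 _] //; contradiction.
  by move=> h; case: (classic (holds (fun v => mu (Var (tr v))) p)) => h1; [right; exact: h|left].
- have hw : w \in Y by apply: hY; rewrite mem_head.
  have hp : forall v, v \in fvars p -> v \in Y by move=> v hv; apply: hY; rewrite in_cons hv orbT.
  have hQ : forall e e' : V -> K, (forall v, v \in Y -> e v = e' v) -> (holds e p <-> holds e' p).
    by move=> e e' h; exact: (@holds_ext _ _ _ K p e e' (fun v hv => h v (hp v (free_fvars hv)))).
  rewrite -(ex_helper hmu hw hQ).
  split; case=> nu [hnu [hag h]]; exists nu; split=> //; split=> //; by apply/(IH nu).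
- have hw : w \in Y by apply: hY; rewrite mem_head.
  have hp : forall v, v \in fvars p -> v \in Y by move=> v hv; apply: hY; rewrite in_cons hv orbT.
  have hQ : forall e e' : V -> K, (forall v, v \in Y -> e v = e' v) -> (~ holds e p <-> ~ holds e' p).
    by move=> e e' h; rewrite (@holds_ext _ _ _ K p e e' (fun v hv => h v (hp v (free_fvars hv)))).
  have := ex_helper hmu hw hQ => E.
  have E2 : (exists nu, is_hom Sigma K nu /\
      (forall y, sval y <> sval (tr w) -> nu (Var y) = mu (Var y)) /\
      ~ Val K (ctr p) nu) <->
      (exists nu, is_hom Sigma K nu /\
      (forall y, sval y <> sval (tr w) -> nu (Var y) = mu (Var y)) /\
      ~ holds (fun v => nu (Var (tr v))) p).
    by split; case=> nu [hnu [hag h]]; exists nu; split=> //; split=> //; rewrite ?(IH nu) // -?(IH nu).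
  rewrite E2 E; split.
  + move=> h a; apply: NNPP => ha; apply: h; by exists a.
  + by move=> h [a ha]; apply: ha.
Qed.
End CTrans.
Definition fin (V : choiceType) (X : {fset V}) (v : V) : option (fvar X) :=
  (insub v : option {v : V | v \in X}).
Lemma fin_in (V : choiceType) (X : {fset V}) v (h : v \in X) : fin X v = Some (exist _ v h).
Proof. by rewrite /fin insubT. Qed.
Lemma fin_sval (V : choiceType) (X : {fset V}) (y : fvar X) : fin X (sval y) = Some y.
Proof. case: y => v hv; exact: fin_in. Qed.

Lemma ex_lgmt (V : choiceType) (ops : Type) (ar : ops -> nat)
  (Sigma : term ar nat -> term ar nat -> Prop) (K : algebra ar)
  (HK : in_variety Sigma K)
  (fr : seq V -> V) (frP : forall s, fr s \notin s) (h0 : K)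
  (X : {fset V}) (u : hformula Sigma X) :
  exists p, Xformula X p /\ forall mu, is_hom Sigma K mu -> (Tp K mu p <-> Val K u mu).
Proof.
set s0 := fun y : fvar X => @Var ops ar V (sval y).
exists (trans fr u s0 (enum_fset X)); split.
- split.
  + move=> v /trans_free [y /= <-]; exact: (proj2_sig y).
  + move=> v /trans_bound; exact.
- move=> mu hmu; split.
  + case=> _ [e [he hh]].
    have hA : forall y v, occurs v (s0 y) -> v \in enum_fset X.
      by move=> y v /= <-; exact: (proj2_sig y).
    exact: ((trans_sem frP HK u hmu hA he).2 hh).
  + move=> hv; split.
      split.
      * move=> v /trans_free [y /= <-]; exact: (proj2_sig y).
      * move=> v /trans_bound; exact.
    pose e0 := fun v => match fin X v with Some y => mu (Var y) | None => h0 end.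
    have he : forall y : fvar X, e0 (sval y) = mu (Var y) by move=> y; rewrite /e0 fin_sval.
    exists e0; split=> //.
    have hA : forall y v, occurs v (s0 y) -> v \in enum_fset X.
      by move=> y v /= <-; exact: (proj2_sig y).
    exact: ((trans_sem frP HK u hmu hA he).1 hv).
Qed.
Lemma ex_mtlg (V : choiceType) (ops : Type) (ar : ops -> nat)
  (Sigma : term ar nat -> term ar nat -> Prop) (K : algebra ar)
  (HK : in_variety Sigma K) (v0 : V)
  (X : {fset V}) (p : fol V ar) :
  Xformula X p ->
  exists u : hformula Sigma X, forall mu, is_hom Sigma K mu -> (Val K u mu <-> Tp K mu p).
Proof.
move=> hX.
case: (classic (inhabited (term ar (fvar X)))) => [[t0]|hne]; last first.
  have noy : fvar X -> False by move=> y; apply: hne; constructor; exact: Var y.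
  case: (classic (exists e : V -> K, holds e p)) => [[e he]|hno].
  - exists (@HTrue V ops ar Sigma X) => mu hmu /=; split=> // _; split=> //.
    by exists e; split=> // y; case: (noy y).
  - exists (@HFalse V ops ar Sigma X) => mu hmu /=; split=> // -[_ [e [_ he]]].
    by apply: hno; exists e.
set Y := (X `|` seq_fset tt (v0 :: fvars p))%fset.
have hv0 : v0 \in Y by rewrite in_fsetU seq_fsetE mem_head orbT.
have hXY : forall v, v \in X -> v \in Y by move=> v hv; rewrite in_fsetU hv.
have hpY : forall v, v \in fvars p -> v \in Y.
  by move=> v hv; rewrite in_fsetU seq_fsetE in_cons hv !orbT.
pose y0 : fvar Y := exist _ v0 hv0.
pose tr := fun v => match fin Y v with Some y => y | None => y0 end.
have trP : forall v, v \in Y -> sval (tr v) = v by move=> v hv; rewrite /tr fin_in.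
pose tau := fun y : fvar Y => match fin X (sval y) with Some x => Var x | None => t0 end.
exists (HSub (shom_subst Sigma tau) (ctr Sigma tr p)) => mu hmu /=.
have hmu' := hom_comp hmu (shom_subst Sigma tau).
rewrite (ctr_sem trP HK hmu' hpY) /=.
set es := fun v => mu (tau (tr v)).
have hes : forall y : fvar X, es (sval y) = mu (Var y).
  move=> y; rewrite /es /tau trP ?fin_sval //; apply: hXY; exact: (proj2_sig y).
split.
- move=> h; split=> //; exists es; split=> //.
- case=> _ [e [he h]].
  apply/(@holds_ext _ _ _ K p es e) => // v hv.
  have hvX : v \in X by apply: hX.1.
  by rewrite -[v]/(sval (exist (fun v => v \in X) v hvX)) hes he.
Qed.
Theorem corollary3p15 (V : choiceType)
  (V_infinite : forall s : seq V, exists v : V, v \notin s)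
  (ops : Type) (ar : ops -> nat)
  (Sigma : term ar nat -> term ar nat -> Prop)
  (H : algebra ar) (H_in_Theta : in_variety Sigma H) :
  forall (X : {fset V}) (A : (term ar (fvar X) -> H) -> Prop),
    LG_definable Sigma H A <-> MT_definable Sigma H A.
Proof.
move=> X A.
pose fr := fun s => xchoose (V_infinite s).
have frP : forall s, fr s \notin s by move=> s; exact: (xchooseP (V_infinite s)).
split.
- case=> T hT.
  case: (classic (inhabited H)) => [[h0]|hne].
  + exists (fun p => Xformula X p /\ exists u, T u /\
        forall mu, is_hom Sigma H mu -> (Tp H mu p <-> Val H u mu)).
    split; first by move=> p [].
    move=> mu; rewrite hT; split.
    * case=> hmu hall; split=> // p [_ [u [hu E]]]; apply/(E mu hmu); exact: hall.
    * case=> hmu hall; split=> // u hu.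
      have [p [hp E]] := ex_lgmt H_in_Theta frP h0 u.
      rewrite /LKer; apply/(E mu hmu); apply: hall; split=> //; exists u; split=> //.
  + case: (classic (exists mu0, A mu0)) => [[mu0 hA0]|hno].
    * exists (fun _ => False); split=> // mu; split.
        by move=> /hT [hmu _]; split.
      case=> hmu _.
      have -> : mu = mu0.
        apply: functional_extensionality => t; exfalso; apply: hne; constructor; exact: (mu t).
      exact: hA0.
    * exists (fun p => p = @FBot V ops ar); split.
        by move=> p ->; split.
      move=> mu; split; first by move=> hA; exfalso; apply: hno; exists mu.
      by case=> hmu h; case: (h _ erefl) => _ [e [_ []]].
- case=> T [hTx hT].
  exists (fun u => exists p, T p /\ forall mu, is_hom Sigma H mu -> (Val H u mu <-> Tp H mu p)).
  move=> mu; rewrite hT; split.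
  + case=> hmu hall; split=> // u [p [hp E]]; rewrite /LKer; apply/(E mu hmu); exact: hall.
  + case=> hmu hall; split=> // p hp.
    have [u E] := ex_mtlg H_in_Theta (fr [::]) (hTx p hp).
    apply/(E mu hmu); apply: hall; exists p; split=> //.
Qed.
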